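(* Let $T>0$, $m_0\in\mathbb R$, let $l:[0,T]\to[0,\infty)$ be continuous and nondecreasing, and let $b:\mathbb R\times[0,\infty)\times[0,T]\to\mathbb R$ be continuous and $L_m$-Lipschitz in its first argument with $L_m\in(0,1)$. For $w\in C[0,T]$ let $M(w)_t=m_0\wedge\inf_{0\le r\le t}w_r$. Then for every $x\in C[0,T]$ the equation $$w_t=x_t-\sup_{s\le t}\big(x_s-b(M(w)_s,l_s,s)\big)^+,\qquad t\in[0,T],$$ has a unique solution $w=\Gamma(x)\in C[0,T]$, and for all $x,x'\in C[0,T]$, $$\|\Gamma(x)-\Gamma(x')\|_\infty\le\frac{2}{1-L_m}\|x-x'\|_\infty.$$
   Context: $C[0,T]$ denotes the space of real continuous functions on $[0,T]$ with the supremum norm $\|\cdot\|_\infty$; $(z)^+=\max(z,0)$. *)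

(* Defs.v *)
From Stdlib Require Import Reals.
From Coquelicot Require Import Coquelicot.
Open Scope R_scope.

(* Elements of C[0,T] are represented by functions R -> R; only their values on
   [0,T] matter. *)
Definition cont_on (T : R) (f : R -> R) : Prop :=
  forall t, 0 <= t <= T -> forall eps, 0 < eps -> exists delta, 0 < delta /\
    forall s, 0 <= s <= T -> Rabs (s - t) < delta -> Rabs (f s - f t) < eps.

(* supremum over s in [a,c] of g s (as a real; finite for continuous g) *)
Definition sup_on (a c : R) (g : R -> R) : R :=
  real (Lub_Rbar (fun y => exists s, a <= s <= c /\ y = g s)).

Definition inf_on (a c : R) (g : R -> R) : R :=
  real (Glb_Rbar (fun y => exists s, a <= s <= c /\ y = g s)).

Definition supnorm (T : R) (f : R -> R) : R := sup_on 0 T (fun t => Rabs (f t)).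

Definition pos_part (z : R) : R := Rmax z 0.

Definition runmin (m0 : R) (w : R -> R) (t : R) : R := Rmin m0 (inf_on 0 t w).

Definition solves (T m0 : R) (l : R -> R) (b : R -> R -> R -> R) (x w : R -> R) : Prop :=
  forall t, 0 <= t <= T ->
    w t = x t - sup_on 0 t (fun s => pos_part (x s - b (runmin m0 w s) (l s) s)).

Definition cont3_on (T : R) (b : R -> R -> R -> R) : Prop :=
  forall m u s, 0 <= u -> 0 <= s <= T -> forall eps, 0 < eps -> exists delta, 0 < delta /\
    forall m' u' s', 0 <= u' -> 0 <= s' <= T ->
      Rabs (m' - m) < delta -> Rabs (u' - u) < delta -> Rabs (s' - s) < delta ->
      Rabs (b m' u' s' - b m u s) < eps.

(* Main.v *)
Require Import Defs.
From Stdlib Require Import Reals Lra Lia.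
From Coquelicot Require Import Coquelicot.
Open Scope R_scope.

Lemma sup_on_spec a c g : a <= c -> (exists B, forall s, a<=s<=c -> g s <= B) ->
  (forall s, a<=s<=c -> g s <= sup_on a c g) /\
  (forall K, (forall s, a<=s<=c -> g s <= K) -> sup_on a c g <= K).
Proof.
  intros Hac [B HB]. unfold sup_on.
  destruct (Lub_Rbar_correct (fun y => exists s, a <= s <= c /\ y = g s)) as [Hub Hl].
  assert (H1 : Rbar_le (g a) (Lub_Rbar (fun y => exists s, a <= s <= c /\ y = g s))).
  { apply Hub. exists a. split; [lra|reflexivity]. }
  assert (H2 : Rbar_le (Lub_Rbar (fun y => exists s, a <= s <= c /\ y = g s)) B).
  { apply Hl. intros y [s [Hs ->]]. simpl. apply HB; auto. }
  destruct (Lub_Rbar (fun y => exists s, a <= s <= c /\ y = g s)) as [l| |] eqn:E;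
    simpl in H1, H2; try contradiction.
  simpl. split.
  - intros s Hs. assert (H := Hub (g s) (ex_intro _ s (conj Hs eq_refl))). exact H.
  - intros K HK. assert (H := Hl K). simpl in H. apply H. intros y [s [Hs ->]]. simpl. auto.
Qed.

Lemma inf_on_spec a c g : a <= c -> (exists B, forall s, a<=s<=c -> B <= g s) ->
  (forall s, a<=s<=c -> inf_on a c g <= g s) /\
  (forall K, (forall s, a<=s<=c -> K <= g s) -> K <= inf_on a c g).
Proof.
  intros Hac [B HB]. unfold inf_on.
  destruct (Glb_Rbar_correct (fun y => exists s, a <= s <= c /\ y = g s)) as [Hub Hl].
  assert (H1 : Rbar_le (Glb_Rbar (fun y => exists s, a <= s <= c /\ y = g s)) (g a)).
  { apply Hub. exists a. split; [lra|reflexivity]. }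
  assert (H2 : Rbar_le B (Glb_Rbar (fun y => exists s, a <= s <= c /\ y = g s))).
  { apply Hl. intros y [s [Hs ->]]. simpl. apply HB; auto. }
  destruct (Glb_Rbar (fun y => exists s, a <= s <= c /\ y = g s)) as [l| |] eqn:E;
    simpl in H1, H2; try contradiction.
  simpl. split.
  - intros s Hs. assert (H := Hub (g s) (ex_intro _ s (conj Hs eq_refl))). exact H.
  - intros K HK. assert (H := Hl K). simpl in H. apply H. intros y [s [Hs ->]]. simpl. auto.
Qed.

Definition clamp (T t : R) := Rmax 0 (Rmin T t).

Lemma clamp_lip T u v : 0 <= T -> Rabs (clamp T u - clamp T v) <= Rabs (u - v).
Proof.
  intros HT. unfold clamp, Rmax, Rmin.
  repeat destruct Rle_dec; unfold Rabs; repeat destruct Rcase_abs; lra.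
Qed.

Lemma clamp_in T u : 0 <= T -> 0 <= clamp T u <= T.
Proof. intros HT. unfold clamp, Rmax, Rmin. repeat destruct Rle_dec; lra. Qed.

Lemma clamp_id T u : 0 <= u <= T -> clamp T u = u.
Proof. intros H. unfold clamp, Rmax, Rmin. repeat destruct Rle_dec; lra. Qed.

Lemma bounded_cont T f : 0 <= T -> cont_on T f ->
  exists B, forall t, 0 <= t <= T -> Rabs (f t) <= B.
Proof.
  intros HT Hf.
  set (h := fun t => Rabs (f (clamp T t))).
  assert (Hc : forall c, 0 <= c <= T -> continuity_pt h c).
  { intros c _. unfold continuity_pt, continue_in, limit1_in, limit_in.
    intros eps Heps.
    destruct (Hf (clamp T c) (clamp_in T c HT) eps Heps) as [d [Hd Hd2]].
    exists d. split; auto. intros x0 [_ Hx0]. simpl in *. unfold R_dist in *.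
    unfold h. eapply Rle_lt_trans. apply Rabs_triang_inv2.
    apply Hd2. apply clamp_in; auto.
    eapply Rle_lt_trans. apply clamp_lip; auto. auto. }
  destruct (continuity_ab_maj h 0 T HT Hc) as [Mx [HM _]].
  exists (h Mx). intros t Ht. specialize (HM t Ht). unfold h in HM.
  rewrite clamp_id in HM; auto.
Qed.

Lemma cont_on_ext T f g : (forall t, 0<=t<=T -> f t = g t) -> cont_on T f -> cont_on T g.
Proof.
  intros He Hf t Ht eps Heps. destruct (Hf t Ht eps Heps) as [d [Hd H]].
  exists d; split; auto. intros s Hs Hst. rewrite <- !He; auto.
Qed.

Lemma cont_on_lip1 T f h : (forall u v, Rabs (h u - h v) <= Rabs (u - v)) ->
  cont_on T f -> cont_on T (fun t => h (f t)).
Proof.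
  intros Hh Hf t Ht eps Heps. destruct (Hf t Ht eps Heps) as [d [Hd H]].
  exists d; split; auto. intros s Hs Hst. eapply Rle_lt_trans. apply Hh. auto.
Qed.

Lemma cont_on_minus T f g : cont_on T f -> cont_on T g -> cont_on T (fun t => f t - g t).
Proof.
  intros Hf Hg t Ht eps Heps.
  destruct (Hf t Ht (eps/2)) as [d1 [Hd1 H1]]; [lra|].
  destruct (Hg t Ht (eps/2)) as [d2 [Hd2 H2]]; [lra|].
  exists (Rmin d1 d2); split. apply Rmin_pos; auto.
  intros s Hs Hst.
  assert (A1 := H1 s Hs (Rlt_le_trans _ _ _ Hst (Rmin_l _ _))).
  assert (A2 := H2 s Hs (Rlt_le_trans _ _ _ Hst (Rmin_r _ _))).
  revert A1 A2. unfold Rabs; repeat destruct Rcase_abs; lra.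
Qed.

Lemma Rabs_lip_opp : forall u v, Rabs (- u - - v) <= Rabs (u - v).
Proof. intros. unfold Rabs; repeat destruct Rcase_abs; lra. Qed.

Lemma Rmin_lip a : forall u v, Rabs (Rmin a u - Rmin a v) <= Rabs (u - v).
Proof. intros. unfold Rmin; repeat destruct Rle_dec; unfold Rabs; repeat destruct Rcase_abs; lra. Qed.

Lemma pos_part_lip : forall u v, Rabs (pos_part u - pos_part v) <= Rabs (u - v).
Proof. intros. unfold pos_part, Rmax; repeat destruct Rle_dec; unfold Rabs; repeat destruct Rcase_abs; lra. Qed.

Lemma sup_lip a c g g' K : a <= c ->
  (exists B, forall s, a<=s<=c -> g s <= B) -> (exists B, forall s, a<=s<=c -> g' s <= B) ->
  (forall s, a<=s<=c -> Rabs (g s - g' s) <= K) ->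
  Rabs (sup_on a c g - sup_on a c g') <= K.
Proof.
  intros Hac Hb Hb' HK.
  destruct (sup_on_spec a c g Hac Hb) as [U L].
  destruct (sup_on_spec a c g' Hac Hb') as [U' L'].
  assert (sup_on a c g <= sup_on a c g' + K).
  { apply L. intros s Hs. specialize (U' s Hs). specialize (HK s Hs). revert HK.
    unfold Rabs; destruct Rcase_abs; lra. }
  assert (sup_on a c g' <= sup_on a c g + K).
  { apply L'. intros s Hs. specialize (U s Hs). specialize (HK s Hs). revert HK.
    unfold Rabs; destruct Rcase_abs; lra. }
  unfold Rabs; destruct Rcase_abs; lra.
Qed.

Lemma inf_lip a c g g' K : a <= c ->
  (exists B, forall s, a<=s<=c -> B <= g s) -> (exists B, forall s, a<=s<=c -> B <= g' s) ->
  (forall s, a<=s<=c -> Rabs (g s - g' s) <= K) ->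
  Rabs (inf_on a c g - inf_on a c g') <= K.
Proof.
  intros Hac Hb Hb' HK.
  destruct (inf_on_spec a c g Hac Hb) as [U L].
  destruct (inf_on_spec a c g' Hac Hb') as [U' L'].
  assert (inf_on a c g' - K <= inf_on a c g).
  { apply L. intros s Hs. specialize (U' s Hs). specialize (HK s Hs). revert HK.
    unfold Rabs; destruct Rcase_abs; lra. }
  assert (inf_on a c g - K <= inf_on a c g').
  { apply L'. intros s Hs. specialize (U s Hs). specialize (HK s Hs). revert HK.
    unfold Rabs; destruct Rcase_abs; lra. }
  unfold Rabs; destruct Rcase_abs; lra.
Qed.

Lemma bnd_up T f : 0 <= T -> cont_on T f -> forall t, 0 <= t <= T ->
  exists B, forall s, 0 <= s <= t -> f s <= B.
Proof.
  intros HT Hf t Ht. destruct (bounded_cont T f HT Hf) as [B HB].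
  exists B. intros s Hs. assert (H := HB s ltac:(lra)). revert H. unfold Rabs; destruct Rcase_abs; lra.
Qed.

Lemma bnd_lo T f : 0 <= T -> cont_on T f -> forall t, 0 <= t <= T ->
  exists B, forall s, 0 <= s <= t -> B <= f s.
Proof.
  intros HT Hf t Ht. destruct (bounded_cont T f HT Hf) as [B HB].
  exists (-B). intros s Hs. assert (H := HB s ltac:(lra)). revert H. unfold Rabs; destruct Rcase_abs; lra.
Qed.

Lemma runsup_cont T g : 0 <= T -> cont_on T g -> cont_on T (fun t => sup_on 0 t g).
Proof.
  intros HT Hg t Ht eps Heps.
  destruct (Hg t Ht (eps/4)) as [d [Hd H]]; [lra|].
  exists d; split; auto. intros t' Ht' Htt.
  destruct (sup_on_spec 0 t g ltac:(lra) (bnd_up T g HT Hg t Ht)) as [U L].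
  destruct (sup_on_spec 0 t' g ltac:(lra) (bnd_up T g HT Hg t' Ht')) as [U' L'].
  assert (g t <= sup_on 0 t g) by (apply U; lra).
  assert (g t' <= sup_on 0 t' g) by (apply U'; lra).
  assert (Hgt' := H t' Ht' Htt).
  destruct (Rle_dec t t') as [Hle|Hle].
  - assert (sup_on 0 t g <= sup_on 0 t' g) by (apply L; intros; apply U'; lra).
    assert (sup_on 0 t' g <= sup_on 0 t g + eps/4).
    { apply L'. intros s Hs. destruct (Rle_dec s t). assert (g s <= sup_on 0 t g) by (apply U; lra). lra.
      assert (Hs' := H s ltac:(lra) ltac:(revert Htt; unfold Rabs; repeat destruct Rcase_abs; lra)).
      revert Hs'; unfold Rabs; destruct Rcase_abs; lra. }
    unfold Rabs; destruct Rcase_abs; lra.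
  - assert (sup_on 0 t' g <= sup_on 0 t g) by (apply L'; intros; apply U; lra).
    assert (sup_on 0 t g <= sup_on 0 t' g + eps/2).
    { apply L. intros s Hs. destruct (Rle_dec s t'). assert (g s <= sup_on 0 t' g) by (apply U'; lra). lra.
      assert (Hs' := H s ltac:(lra) ltac:(revert Htt; unfold Rabs; repeat destruct Rcase_abs; lra)).
      revert Hs' Hgt'; unfold Rabs; repeat destruct Rcase_abs; lra. }
    unfold Rabs; destruct Rcase_abs; lra.
Qed.

Lemma inf_as_sup a c g : a <= c -> (exists B, forall s, a<=s<=c -> B <= g s) ->
  (exists B, forall s, a<=s<=c -> g s <= B) ->
  inf_on a c g = - sup_on a c (fun s => - g s).
Proof.
  intros Hac [B1 H1] [B2 H2].
  destruct (inf_on_spec a c g Hac (ex_intro _ B1 H1)) as [U L].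
  destruct (sup_on_spec a c (fun s => - g s) Hac) as [U' L'].
  { exists (-B1). intros s Hs. specialize (H1 s Hs). lra. }
  assert (- sup_on a c (fun s => - g s) <= inf_on a c g).
  { apply L. intros s Hs. specialize (U' s Hs). simpl in U'. lra. }
  assert (sup_on a c (fun s => - g s) <= - inf_on a c g).
  { apply L'. intros s Hs. specialize (U s Hs). lra. }
  lra.
Qed.

Lemma runinf_cont T w : 0 <= T -> cont_on T w -> cont_on T (fun t => inf_on 0 t w).
Proof.
  intros HT Hw.
  apply cont_on_ext with (f := fun t => - sup_on 0 t (fun s => - w s)).
  { intros t Ht. symmetry. apply inf_as_sup. lra. apply (bnd_lo T w HT Hw t Ht). apply (bnd_up T w HT Hw t Ht). }
  apply (cont_on_lip1 T (fun t => sup_on 0 t (fun s => - w s)) Ropp Rabs_lip_opp).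
  apply runsup_cont; auto.
  apply (cont_on_lip1 T w Ropp Rabs_lip_opp); auto.
Qed.

Lemma runmin_cont T m0 w : 0 <= T -> cont_on T w -> cont_on T (runmin m0 w).
Proof.
  intros HT Hw. unfold runmin.
  apply (cont_on_lip1 T (fun t => inf_on 0 t w) (Rmin m0) (Rmin_lip m0)).
  apply runinf_cont; auto.
Qed.

Lemma comp3_cont T b m l : cont3_on T b -> cont_on T m -> cont_on T l ->
  (forall t, 0<=t<=T -> 0 <= l t) -> cont_on T (fun s => b (m s) (l s) s).
Proof.
  intros Hb Hm Hl Hl0 t Ht eps Heps.
  destruct (Hb (m t) (l t) t (Hl0 t Ht) Ht eps Heps) as [d [Hd H]].
  destruct (Hm t Ht d Hd) as [d1 [Hd1 H1]].
  destruct (Hl t Ht d Hd) as [d2 [Hd2 H2]].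
  exists (Rmin d (Rmin d1 d2)). split. repeat apply Rmin_pos; auto.
  intros s Hs Hst.
  assert (Rmin d (Rmin d1 d2) <= d) by apply Rmin_l.
  assert (Rmin d (Rmin d1 d2) <= d1) by (eapply Rle_trans; [apply Rmin_r|apply Rmin_l]).
  assert (Rmin d (Rmin d1 d2) <= d2) by (eapply Rle_trans; [apply Rmin_r|apply Rmin_r]).
  apply H; auto. apply H1; auto; lra. apply H2; auto; lra. lra.
Qed.

Definition gfun m0 (l : R -> R) (b : R -> R -> R -> R) (x w : R -> R) :=
  fun s => pos_part (x s - b (runmin m0 w s) (l s) s).
Definition Fop m0 l b x w := fun t => x t - sup_on 0 t (gfun m0 l b x w).

Lemma gfun_cont T m0 l b x w : 0 <= T -> cont_on T l -> (forall t, 0<=t<=T -> 0 <= l t) ->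
  cont3_on T b -> cont_on T x -> cont_on T w -> cont_on T (gfun m0 l b x w).
Proof.
  intros HT Hl Hl0 Hb Hx Hw. unfold gfun.
  apply (cont_on_lip1 T _ pos_part pos_part_lip).
  apply cont_on_minus; auto. apply comp3_cont; auto. apply runmin_cont; auto.
Qed.

Lemma Fop_cont T m0 l b x w : 0 <= T -> cont_on T l -> (forall t, 0<=t<=T -> 0 <= l t) ->
  cont3_on T b -> cont_on T x -> cont_on T w -> cont_on T (Fop m0 l b x w).
Proof.
  intros. unfold Fop. apply cont_on_minus; auto. apply runsup_cont; auto. apply gfun_cont; auto.
Qed.

Lemma key T m0 Lm l b x x' w w' Kx Kw t : 0 <= T -> cont_on T l ->
  (forall t, 0<=t<=T -> 0 <= l t) -> cont3_on T b -> 0 <= Lm ->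
  (forall m m' u s, 0 <= u -> 0 <= s <= T -> Rabs (b m u s - b m' u s) <= Lm * Rabs (m - m')) ->
  cont_on T x -> cont_on T x' -> cont_on T w -> cont_on T w' ->
  (forall r, 0<=r<=T -> Rabs (x r - x' r) <= Kx) ->
  (forall r, 0<=r<=T -> Rabs (w r - w' r) <= Kw) -> 0 <= t <= T ->
  Rabs (sup_on 0 t (gfun m0 l b x w) - sup_on 0 t (gfun m0 l b x' w')) <= Kx + Lm * Kw.
Proof.
  intros HT Hl Hl0 Hb HLm Hlip Hx Hx' Hw Hw' HKx HKw Ht.
  apply sup_lip. lra.
  apply (bnd_up T); auto. apply gfun_cont; auto.
  apply (bnd_up T); auto. apply gfun_cont; auto.
  intros s Hs. unfold gfun. eapply Rle_trans. apply pos_part_lip.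
  assert (HM : Rabs (runmin m0 w s - runmin m0 w' s) <= Kw).
  { unfold runmin. eapply Rle_trans. apply Rmin_lip. apply inf_lip. lra.
    apply (bnd_lo T w HT Hw s); lra. apply (bnd_lo T w' HT Hw' s); lra.
    intros r Hr. apply HKw. lra. }
  assert (Hbb := Hlip (runmin m0 w s) (runmin m0 w' s) (l s) s (Hl0 s ltac:(lra)) ltac:(lra)).
  assert (Lm * Rabs (runmin m0 w s - runmin m0 w' s) <= Lm * Kw) by (apply Rmult_le_compat_l; auto).
  assert (HX := HKx s ltac:(lra)).
  revert Hbb HX H. set (A := b (runmin m0 w s) (l s) s). set (A' := b (runmin m0 w' s) (l s) s).
  unfold Rabs; repeat destruct Rcase_abs; lra.
Qed.

Lemma supnorm_spec T f : 0 <= T -> cont_on T f ->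
  (forall t, 0 <= t <= T -> Rabs (f t) <= supnorm T f) /\
  (forall K, (forall t, 0 <= t <= T -> Rabs (f t) <= K) -> supnorm T f <= K).
Proof.
  intros HT Hf. unfold supnorm. apply sup_on_spec; auto.
  destruct (bounded_cont T f HT Hf) as [B HB]. exists B; auto.
Qed.

Lemma est T m0 Lm l b x x' w w' : 0 <= T -> cont_on T l ->
  (forall t, 0<=t<=T -> 0 <= l t) -> cont3_on T b -> 0 < Lm < 1 ->
  (forall m m' u s, 0 <= u -> 0 <= s <= T -> Rabs (b m u s - b m' u s) <= Lm * Rabs (m - m')) ->
  cont_on T x -> cont_on T x' ->
  cont_on T w -> solves T m0 l b x w -> cont_on T w' -> solves T m0 l b x' w' ->
  supnorm T (fun t => w t - w' t) <= 2 / (1 - Lm) * supnorm T (fun t => x t - x' t).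
Proof.
  intros HT Hl Hl0 Hb HLm Hlip Hx Hx' Hw Sw Hw' Sw'.
  destruct (supnorm_spec T (fun t => w t - w' t) HT (cont_on_minus T _ _ Hw Hw')) as [U L].
  destruct (supnorm_spec T (fun t => x t - x' t) HT (cont_on_minus T _ _ Hx Hx')) as [Ux Lx].
  set (K := supnorm T (fun t => w t - w' t)) in *.
  set (Kx := supnorm T (fun t => x t - x' t)) in *.
  assert (K <= 2 * Kx + Lm * K).
  { apply L. intros t Ht. rewrite (Sw t Ht), (Sw' t Ht).
    assert (H := key T m0 Lm l b x x' w w' Kx K t HT Hl Hl0 Hb ltac:(lra) Hlip Hx Hx' Hw Hw' Ux U Ht).
    unfold gfun in H. assert (H2 := Ux t Ht). simpl in H2.
    revert H H2. set (A := sup_on 0 t _). set (A' := sup_on 0 t _).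
    unfold Rabs; repeat destruct Rcase_abs; lra. }
  assert (K * (1 - Lm) <= 2 * Kx) by lra.
  apply Rmult_le_reg_r with (1 - Lm). lra.
  replace (2 / (1 - Lm) * Kx * (1 - Lm)) with (2 * Kx) by (field; lra). lra.
Qed.

Fixpoint pic m0 l b (x : R -> R) (n : nat) : R -> R :=
  match n with O => x | S k => Fop m0 l b x (pic m0 l b x k) end.

Lemma exist_sol T m0 Lm l b x : 0 <= T -> cont_on T l ->
  (forall t, 0<=t<=T -> 0 <= l t) -> cont3_on T b -> 0 < Lm < 1 ->
  (forall m m' u s, 0 <= u -> 0 <= s <= T -> Rabs (b m u s - b m' u s) <= Lm * Rabs (m - m')) ->
  cont_on T x -> exists w, cont_on T w /\ solves T m0 l b x w.
Proof.
  intros HT Hl Hl0 Hb HLm Hlip Hx.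
  set (p := pic m0 l b x).
  assert (Pc : forall n, cont_on T (p n)).
  { induction n; simpl; auto. apply Fop_cont; auto. }
  destruct (bounded_cont T (fun t => p 1%nat t - p 0%nat t) HT (cont_on_minus T _ _ (Pc 1%nat) (Pc 0%nat))) as [D HD].
  assert (HD0 : 0 <= D) by (eapply Rle_trans; [apply Rabs_pos| apply (HD 0); lra]).
  assert (Hx0 : forall r, 0 <= r <= T -> Rabs (x r - x r) <= 0).
  { intros. rewrite Rminus_diag, Rabs_R0; lra. }
  assert (Step : forall n t, 0 <= t <= T -> Rabs (p (S n) t - p n t) <= Lm ^ n * D).
  { induction n; intros t Ht. simpl. rewrite Rmult_1_l. apply HD; auto.
    change (p (S (S n))) with (Fop m0 l b x (p (S n))).
    change (p (S n)) with (Fop m0 l b x (p n)) at 2.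
    unfold Fop.
    assert (H := key T m0 Lm l b x x (p (S n)) (p n) 0 (Lm ^ n * D) t HT Hl Hl0 Hb ltac:(lra) Hlip
      Hx Hx (Pc (S n)) (Pc n) Hx0 IHn Ht).
    revert H. simpl. set (A := sup_on 0 t _). set (A' := sup_on 0 t _).
    unfold Rabs; repeat destruct Rcase_abs; lra. }
  assert (Hpow : forall n, 0 <= Lm ^ n) by (intros; apply pow_le; lra).
  assert (Diff : forall n k t, 0 <= t <= T ->
     Rabs (p (n + k)%nat t - p n t) <= D * (Lm ^ n - Lm ^ (n + k)) / (1 - Lm)).
  { intros n k t Ht. induction k.
    - rewrite Nat.add_0_r, Rminus_diag, Rabs_R0. replace (D * (Lm ^ n - Lm ^ n) / (1 - Lm)) with 0 by (field; lra). lra.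
    - rewrite Nat.add_succ_r. assert (H := Step (n + k)%nat t Ht).
      assert (E : Lm ^ S (n + k) = Lm * Lm ^ (n + k)) by reflexivity.
      apply Rle_trans with (Rabs (p (S (n + k)) t - p (n + k)%nat t) + Rabs (p (n + k)%nat t - p n t)).
      { unfold Rabs; repeat destruct Rcase_abs; lra. }
      rewrite E. apply Rle_trans with (Lm ^ (n + k) * D + D * (Lm ^ n - Lm ^ (n + k)) / (1 - Lm)). lra.
      right. field. lra. }
  set (e := fun n => D * Lm ^ n / (1 - Lm)).
  assert (He0 : forall n, 0 <= e n).
  { intros n. unfold e. apply Rmult_le_pos. apply Rmult_le_pos; auto. left; apply Rinv_0_lt_compat; lra. }
  assert (Diff2 : forall n m t, (n <= m)%nat -> 0 <= t <= T -> Rabs (p m t - p n t) <= e n).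
  { intros n m t Hnm Ht. replace m with (n + (m - n))%nat by lia.
    eapply Rle_trans. apply Diff; auto. unfold e. unfold Rdiv. apply Rmult_le_compat_r.
    left; apply Rinv_0_lt_compat; lra. apply Rmult_le_compat_l; auto. specialize (Hpow (n + (m - n))%nat). lra. }
  assert (Esmall : forall eps, 0 < eps -> exists N, forall n, (n >= N)%nat -> e n < eps).
  { intros eps Heps.
    destruct (pow_lt_1_zero Lm ltac:(rewrite Rabs_pos_eq; lra) (eps * (1 - Lm) / (D + 1))) as [N HN].
    { apply Rdiv_lt_0_compat; [apply Rmult_lt_0_compat|]; lra. }
    exists N. intros n Hn. specialize (HN n Hn). rewrite Rabs_pos_eq in HN by auto.
    unfold e. apply Rle_lt_trans with (D * (eps * (1 - Lm) / (D + 1)) / (1 - Lm)).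
    { unfold Rdiv. apply Rmult_le_compat_r. left; apply Rinv_0_lt_compat; lra.
      apply Rmult_le_compat_l; auto. lra. }
    replace (D * (eps * (1 - Lm) / (D + 1)) / (1 - Lm)) with (eps * (D / (D + 1))) by (field; lra).
    assert (D / (D + 1) < 1). { apply Rmult_lt_reg_r with (D + 1). lra. field_simplify; lra. }
    assert (0 <= D / (D+1)) by (apply Rmult_le_pos; [lra | left; apply Rinv_0_lt_compat; lra]).
    nra. }
  assert (Lim : forall t, 0 <= t <= T -> exists y : R, is_lim_seq (fun n => p n t) y).
  { intros t Ht. apply ex_lim_seq_cauchy_corr. intros [eps Heps]. simpl.
    destruct (Esmall eps Heps) as [N HN]. exists N. intros n m Hn Hm.
    destruct (Compare_dec.le_lt_dec n m).
    - rewrite Rabs_minus_sym. eapply Rle_lt_trans. apply Diff2; auto. apply HN; lia.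
    - eapply Rle_lt_trans. apply Diff2; auto; lia. apply HN; lia. }
  set (w := fun t => real (Lim_seq (fun n => p n t))).
  assert (Wb : forall n t, 0 <= t <= T -> Rabs (w t - p n t) <= e n).
  { intros n t Ht. destruct (Lim t Ht) as [y Hy].
    assert (Wy : w t = y). { unfold w. rewrite (is_lim_seq_unique _ _ Hy). reflexivity. }
    rewrite Wy. apply Rle_plus_epsilon. intros eps Heps.
    apply is_lim_seq_spec in Hy. destruct (Hy (mkposreal eps Heps)) as [N HN]. simpl in HN.
    specialize (HN (n + N)%nat ltac:(lia)). assert (H2 := Diff2 n (n + N)%nat t ltac:(lia) Ht).
    revert HN H2. unfold Rabs; repeat destruct Rcase_abs; lra. }
  assert (Wc : cont_on T w).
  { intros t Ht eps Heps. destruct (Esmall (eps/3) ltac:(lra)) as [N HN].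
    destruct (Pc N t Ht (eps/3) ltac:(lra)) as [d [Hd H]]. exists d; split; auto.
    intros s Hs Hst. specialize (H s Hs Hst). assert (A1 := Wb N s Hs). assert (A2 := Wb N t Ht).
    specialize (HN N ltac:(lia)). revert H A1 A2. unfold Rabs; repeat destruct Rcase_abs; lra. }
  exists w. split; auto. intros t Ht.
  assert (Z : forall n, Rabs (Fop m0 l b x w t - w t) <= 2 * e n).
  { intros n.
    assert (H := key T m0 Lm l b x x w (p n) 0 (e n) t HT Hl Hl0 Hb ltac:(lra) Hlip
      Hx Hx Wc (Pc n) Hx0 (Wb n) Ht).
    assert (H2 := Wb (S n) t Ht).
    assert (E : e (S n) = Lm * e n) by (unfold e; simpl; field; lra).
    change (p (S n) t) with (Fop m0 l b x (p n) t) in H2.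
    assert (Lm * e n <= e n) by (specialize (He0 n); nra).
    revert H H2. unfold Fop. set (A := sup_on 0 t _). set (A' := sup_on 0 t _).
    unfold Rabs; repeat destruct Rcase_abs; lra. }
  assert (Rabs (Fop m0 l b x w t - w t) <= 0).
  { apply Rle_plus_epsilon. intros eps Heps. destruct (Esmall (eps/2) ltac:(lra)) as [N HN].
    specialize (Z N). specialize (HN N ltac:(lia)). lra. }
  unfold Fop, gfun in H. revert H. unfold Rabs; destruct Rcase_abs; lra.
Qed.

Theorem mainTheorem8 (T m0 Lm : R) (l : R -> R) (b : R -> R -> R -> R)
  (HT : 0 < T)
  (Hl_cont : cont_on T l)
  (Hl_nonneg : forall t, 0 <= t <= T -> 0 <= l t)
  (Hl_mono : forall s t, 0 <= s -> s <= t -> t <= T -> l s <= l t)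
  (Hb_cont : cont3_on T b)
  (HLm : 0 < Lm < 1)
  (Hb_lip : forall m m' u s, 0 <= u -> 0 <= s <= T ->
              Rabs (b m u s - b m' u s) <= Lm * Rabs (m - m')) :
  (forall x, cont_on T x ->
     (exists w, cont_on T w /\ solves T m0 l b x w) /\
     (forall w1 w2, cont_on T w1 -> solves T m0 l b x w1 ->
                    cont_on T w2 -> solves T m0 l b x w2 ->
                    forall t, 0 <= t <= T -> w1 t = w2 t)) /\
  (forall x x' w w', cont_on T x -> cont_on T x' ->
     cont_on T w -> solves T m0 l b x w ->
     cont_on T w' -> solves T m0 l b x' w' ->
     supnorm T (fun t => w t - w' t) <= 2 / (1 - Lm) * supnorm T (fun t => x t - x' t)).
Proof.
  assert (HT0 : 0 <= T) by lra.
  split.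
  - intros x Hx. split. apply (exist_sol T m0 Lm l b x); auto.
    intros w1 w2 H1 S1 H2 S2 t Ht.
    assert (E := est T m0 Lm l b x x w1 w2 HT0 Hl_cont Hl_nonneg Hb_cont HLm Hb_lip Hx Hx H1 S1 H2 S2).
    destruct (supnorm_spec T (fun t => x t - x t) HT0 (cont_on_minus T _ _ Hx Hx)) as [_ Lx].
    assert (Z : supnorm T (fun t => x t - x t) <= 0).
    { apply Lx. intros. rewrite Rminus_diag, Rabs_R0; lra. }
    destruct (supnorm_spec T (fun t => w1 t - w2 t) HT0 (cont_on_minus T _ _ H1 H2)) as [U _].
    assert (0 < 2 / (1 - Lm)) by (apply Rdiv_lt_0_compat; lra).
    assert (Hw := U t Ht). simpl in Hw.
    assert (2 / (1 - Lm) * supnorm T (fun t => x t - x t) <= 0).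
    { rewrite <- (Rmult_0_r (2 / (1 - Lm))). apply Rmult_le_compat_l; lra. }
    revert Hw. unfold Rabs; destruct Rcase_abs; lra.
  - intros. apply (est T m0 Lm l b); auto.
Qed.
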